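(* Under the Markov-modulated setting, assume in addition that the chain is reversible, $\pi(x)P(x,y)=\pi(y)P(y,x)$ for all $x,y$. Let $1=\lambda_1\ge\lambda_2\ge\dots\ge\lambda_K>-1$ be the eigenvalues of $P$ ($K=|\mathcal{X}|$) with real eigenfunctions $f_1\equiv1,f_2,\dots,f_K$ forming an orthonormal basis with respect to $\langle f,g\rangle_\pi=\sum_{x}\pi(x)f(x)g(x)$, and let $\lambda_*=\max\{|\lambda_j|:2\le j\le K\}$. Define $$R=\sum_{z\in\mathcal{Z}:\,\sum_y\pi(y)r_y(z)>0}\frac{\sum_{y\in\mathcal{X}}\pi(y)r_y(z)^2}{\sum_{y\in\mathcal{X}}\pi(y)r_y(z)}.$$ Then $1\le R\le K$, and for every $x\in\mathcal{X}$, $n\ge0$, $L\ge0$, $$D_n(L)\le\frac12\Big(\sum_{j=2}^K\lambda_j^{2L}f_j(x)^2\Big)^{1/2}\sqrt2\,(R-1)^{1/2},$$ and consequently $$D_n(L)\le\frac12\lambda_*^L\Big(\frac1{\pi(x)}-1\Big)^{1/2}\sqrt2\,(R-1)^{1/2}.$$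
   Context: Markov-modulated setting: $(X_n)_{n\ge0}$ is a discrete-time, time-homogeneous Markov chain on a finite state space $\mathcal{X}$ with transition matrix $P$ ($P^L$ its $L$-th power), irreducible and aperiodic with stationary distribution $\pi$, started in stationarity ($X_0\sim\pi$). $(Z_n)_{n\ge0}$ take values in a countable set $\mathcal{Z}$ with $\Pr(Z_n=z\mid X_0,\dots,X_n,Z_0,\dots,Z_{n-1})=r_{X_n}(z)$ for a fixed family of pmfs $(r_y)_{y\in\mathcal{X}}$. $\|p-q\|_{TV}=\frac12\sum_z|p(z)-q(z)|$. Predictability given perfect observation $X_n=x$: $D_n(L)=\|\Pr(Z_{n+L}\in\cdot\mid X_n=x)-\Pr(Z_{n+L}\in\cdot)\|_{TV}$. *)

(* Defs.v *)
From HB Require Import structures.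
From mathcomp Require Import all_boot all_order all_algebra.
From mathcomp Require Import all_classical all_reals all_analysis.
Set Implicit Arguments. Unset Strict Implicit. Unset Printing Implicit Defensive.
Import Order.TTheory GRing.Theory Num.Theory.
Local Open Scope classical_set_scope.
Local Open Scope ring_scope.

(* State space: 'I_K (a finite set with K = |X| elements).
   Transition matrix P : 'M[R]_K, stationary distribution pi : 'I_K -> R. *)

Section Chain.
Variables (R : realType) (K : nat).

Definition stochastic (P : 'M[R]_K) : Prop :=
  (forall x y, 0 <= P x y) /\ (forall x, \sum_(y < K) P x y = 1).

Definition irreducible (P : 'M[R]_K) : Prop :=
  forall x y : 'I_K, exists m : nat, 0 < (P ^+ m) x y.

(* period of x is gcd {m >= 1 : P^m(x,x) > 0}; aperiodic: every period is 1,
   i.e. the only common divisor of all return times is 1. *)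
Definition aperiodic (P : 'M[R]_K) : Prop :=
  forall x : 'I_K, forall d : nat,
    (forall m : nat, (0 < m)%N -> 0 < (P ^+ m) x x -> (d %| m)%N) -> d = 1%N.

Definition stationary_distribution (P : 'M[R]_K) (pi : 'I_K -> R) : Prop :=
  (forall x, 0 <= pi x) /\ \sum_(x < K) pi x = 1 /\
  (forall y, \sum_(x < K) pi x * P x y = pi y).

Definition reversible (P : 'M[R]_K) (pi : 'I_K -> R) : Prop :=
  forall x y, pi x * P x y = pi y * P y x.

End Chain.

Section Process.
Variables (d : measure_display) (T : measurableType d) (R : realType).
Variables (K : nat) (Zt : countType).

Definition path_le (S : Type) (X : nat -> T -> S) (n : nat) (xs : nat -> S) : set T :=
  [set t | forall i, (i <= n)%N -> X i t = xs i].
Definition path_lt (S : Type) (X : nat -> T -> S) (n : nat) (zs : nat -> S) : set T :=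
  [set t | forall i, (i < n)%N -> X i t = zs i].

(* Markov-modulated setting:
   - (X_n) is a time-homogeneous Markov chain on 'I_K with transition matrix P
     and X_0 ~ pi (given through its finite-dimensional distributions);
   - Pr(Z_n = z | X_0..X_n, Z_0..Z_{n-1}) = r_{X_n}(z), written as
     Pr(B /\ Z_n = z) = r_{x_n}(z) Pr(B) for every cylinder event B. *)
Definition markov_modulated (Pr : probability T R) (P : 'M[R]_K) (pi : 'I_K -> R)
    (r : 'I_K -> Zt -> R) (X : nat -> T -> 'I_K) (Z : nat -> T -> Zt) : Prop :=
  (forall n x, measurable [set t | X n t = x]) /\
  (forall n z, measurable [set t | Z n t = z]) /\
  (forall y z, 0 <= r y z) /\
  (forall y, (\esum_(z in [set: Zt]) (r y z)%:E = 1)%E) /\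
      (forall n (xs : nat -> 'I_K),
          Pr (path_le X n xs) = (pi (xs 0%N) * \prod_(i < n) P (xs i) (xs i.+1))%:E) /\
      (forall n (xs : nat -> 'I_K) (zs : nat -> Zt) (z : Zt),
          Pr (path_le X n xs `&` path_lt Z n zs `&` [set t | Z n t = z]) =
          ((r (xs n) z)%:E * Pr (path_le X n xs `&` path_lt Z n zs))%E).

End Process.

Definition TV (R : realType) (Zt : countType) (p q : Zt -> R) : \bar R :=
  ((2^-1)%:E * \esum_(z in [set: Zt]) (`|p z - q z|)%:E)%E.

(* D_n(L) = || Pr(Z_{n+L} in . | X_n = x) - Pr(Z_{n+L} in .) ||_TV *)
Definition predictability d (T : measurableType d) (R : realType) (K : nat)
    (Zt : countType) (Pr : probability T R) (X : nat -> T -> 'I_K)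
    (Z : nat -> T -> Zt) (x : 'I_K) (n L : nat) : \bar R :=
  TV (fun z => fine (Pr ([set t | Z (n + L)%N t = z] `&` [set t | X n t = x]))
               / fine (Pr [set t | X n t = x]))
     (fun z => fine (Pr [set t | Z (n + L)%N t = z])).

Definition Rratio (R : realType) (K : nat) (Zt : countType)
    (pi : 'I_K -> R) (r : 'I_K -> Zt -> R) : \bar R :=
  (\esum_(z in [set z | (0 < \sum_(y < K) pi y * r y z)%R])
     ((\sum_(y < K) pi y * r y z ^+ 2) / (\sum_(y < K) pi y * r y z))%:E)%E.

(* lambda_* = max_{2 <= j <= K} |lambda_j|  (index 0 here is lambda_1) *)
Definition lambda_star (R : realType) (K : nat) (lam : 'I_K -> R) : R :=
  \big[Num.max/0]_(j < K | (0 < j)%N) `|lam j|.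

(* Main.v *)
Require Import Defs.
From HB Require Import structures.
From mathcomp Require Import all_boot all_order all_algebra.
From mathcomp Require Import all_classical all_reals all_analysis.
From mathcomp Require Import ring lra.
Import Order.TTheory GRing.Theory Num.Theory.
Local Open Scope classical_set_scope.
Local Open Scope ring_scope.
Lemma completeness (R : realType) K (pi : 'I_K -> R) (f : 'I_K -> 'I_K -> R) :
  (forall i j, \sum_(x < K) pi x * f i x * f j x = (i == j)%:R) ->
  forall x y, pi x * \sum_(j < K) f j x * f j y = (x == y)%:R.
Proof.
move=> ON x y.
pose F := \matrix_(j < K, x < K) f j x.
pose G := \matrix_(x < K, j < K) (pi x * f j x).
have FG : F *m G = 1%:M.
  apply/matrixP => i j; rewrite !mxE -ON; apply: eq_bigr => z _.
  by rewrite !mxE mulrCA mulrA.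
have := congr1 (fun M : 'M[R]_K => M x y) (mulmx1C FG); rewrite !mxE => <-.
rewrite mulr_sumr; apply: eq_bigr => j _; rewrite !mxE mulrA //.
Qed.

Set Implicit Arguments. Unset Strict Implicit.
Section Beta.
Variables (R : realType) (K : nat) (P : 'M[R]_K) (pi : 'I_K -> R).

Definition okc (c : nat -> option 'I_K) (i : nat) (y : 'I_K) : R :=
  if c i is Some w then (y == w)%:R else 1.

Fixpoint beta (c : nat -> option 'I_K) (m : nat) : 'I_K -> R := fun y =>
  match m with
  | 0 => okc c 0 y * pi y
  | m'.+1 => okc c m'.+1 y * \sum_(w < K) beta c m' w * P w y
  end.

Definition updc (c : nat -> option 'I_K) (k : nat) (w : 'I_K) :=
  fun i => if i == k then Some w else c i.

Lemma beta_dep c c' m : (forall i, (i <= m)%N -> c i = c' i) ->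
  forall y, beta c m y = beta c' m y.
Proof.
elim: m => [|m IH] H y /=; first by rewrite /okc H.
rewrite /okc H //; congr (_ * _); apply: eq_bigr => w _.
by rewrite IH // => i Hi; apply: H; rewrite (leq_trans Hi).
Qed.

Lemma beta_full (xs : nat -> 'I_K) N y :
  beta (fun i => Some (xs i)) N y =
  (y == xs N)%:R * (pi (xs 0%N) * \prod_(i < N) P (xs i) (xs i.+1)).
Proof.
elim: N y => [|N IH] y /=; first by rewrite /okc big_ord0 mulr1; case: eqP => [->|_]; rewrite ?mul0r.
rewrite /okc; under eq_bigr do rewrite IH.
rewrite (bigD1 (xs N)) //= eqxx [X in _ + X]big1 ?addr0; last first.
  by move=> w /negPf ->; rewrite !mul0r.
rewrite big_ord_recr /= mul1r; case: eqP => [->|]; last by rewrite !mul0r.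
by rewrite !mul1r mulrA.
Qed.

Lemma beta_lin c k m y : c k = None -> (k <= m)%N ->
  \sum_(w < K) beta (updc c k w) m y = beta c m y.
Proof.
move=> ck; elim: m y => [|m IH] y.
  rewrite leqn0 => /eqP k0; subst k => /=.
  rewrite /okc /updc /= ck mul1r.
  rewrite (bigD1 y) //= eqxx mul1r [X in _ + X]big1 ?addr0 // => w /negPf.
  by rewrite eq_sym => ->; rewrite mul0r.
rewrite leq_eqVlt => /orP [/eqP km|km].
  subst k => /=.
  have E w : \sum_(u < K) beta (updc c m.+1 w) m u * P u y =
             \sum_(u < K) beta c m u * P u y.
    apply: eq_bigr => u _; congr (_ * _); apply: beta_dep => i Hi.
    by rewrite /updc; case: eqP => // Hx; move: Hi; rewrite Hx ltnn.
  under eq_bigr do rewrite E.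
  rewrite -big_distrl /=; congr (_ * _).
  rewrite /okc /updc eqxx ck.
  rewrite (bigD1 y) //= eqxx [X in _ + X]big1 ?addr0 // => w /negPf.
  by rewrite eq_sym => ->.
have km' : (k <= m)%N by [].
have Hok w : okc (updc c k w) m.+1 y = okc c m.+1 y.
  by rewrite /okc /updc; case: eqP => // Hx; move: km; rewrite Hx ltnn.
rewrite /=; under eq_bigr do rewrite Hok.
rewrite -mulr_sumr; congr (_ * _).
rewrite exchange_big /=; apply: eq_bigr => u _.
by rewrite -big_distrl /= IH.
Qed.


Lemma beta_none (stat : forall y, \sum_(x < K) pi x * P x y = pi y) m y :
  beta (fun _ => None) m y = pi y.
Proof.
elim: m y => [|m IH] y /=; first by rewrite /okc mul1r.
by rewrite /okc mul1r; under eq_bigr do rewrite IH; rewrite stat.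
Qed.

Definition cx (n : nat) (x : 'I_K) : nat -> option 'I_K :=
  fun i => if i == n then Some x else None.

Lemma beta_cx_lt (stat : forall y, \sum_(x < K) pi x * P x y = pi y) n x m y :
  (m < n)%N -> beta (cx n x) m y = pi y.
Proof.
move=> mn; rewrite -(beta_none stat m y); apply: beta_dep => i Hi.
by rewrite /cx; case: eqP => // E; move: mn; rewrite -E ltnNge Hi.
Qed.

Lemma beta_cx_eq (stat : forall y, \sum_(x < K) pi x * P x y = pi y) n x y :
  beta (cx n x) n y = (y == x)%:R * pi y.
Proof.
case: n => [|n] /=; first by rewrite /okc /cx.
rewrite /okc /cx eqxx; congr (_ * _).
under eq_bigr do rewrite (@beta_cx_lt stat n.+1 x n) //.
by rewrite stat.
Qed.

Lemma beta_cx_spec (stat : forall y, \sum_(x < K) pi x * P x y = pi y)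
  (lam : 'I_K -> R) (f : 'I_K -> 'I_K -> R)
  (compl : forall x y, pi x * \sum_(j < K) f j x * f j y = (x == y)%:R)
  (rev : forall x y, pi x * P x y = pi y * P y x)
  (eig : forall j x, \sum_(y < K) P x y * f j y = lam j * f j x) n x l y :
  beta (cx n x) (n + l) y = pi x * pi y * \sum_(j < K) lam j ^+ l * f j x * f j y.
Proof.
elim: l y => [|l IH] y.
  rewrite addn0 beta_cx_eq //.
  rewrite (eq_bigr (fun j => f j x * f j y)); last by move=> j _; rewrite expr0 mul1r.
  rewrite mulrAC compl eq_sym; ring.
rewrite addnS /= {1}/okc /cx.
have -> : ((n + l).+1 == n) = false.
  by apply/negbTE; rewrite neq_ltn ltnS leq_addr orbT.
rewrite mul1r.
transitivity (\sum_(j < K) (pi x * (lam j ^+ l * f j x)) *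
                 \sum_(w < K) pi w * P w y * f j w).
  under eq_bigr do rewrite IH mulr_sumr big_distrl /=.
  rewrite exchange_big /=; apply: eq_bigr => j _.
  rewrite mulr_sumr; apply: eq_bigr => w _; ring.
rewrite mulr_sumr; apply: eq_bigr => j _.
under eq_bigr do rewrite rev -mulrA.
rewrite -mulr_sumr eig exprS; ring.
Qed.
End Beta.
Lemma cadd d (T : measurableType d) (R : realType) (Zt : countType)
  (mu : {measure set T -> \bar R}) (E1 E2 : Zt -> set T) (c : R) :
  (forall w, measurable (E1 w)) -> (forall w, measurable (E2 w)) ->
  trivIset setT E1 -> trivIset setT E2 -> 0 <= c ->
  (forall w, mu (E1 w) = (c%:E * mu (E2 w))%E) ->
  mu (\bigcup_w E1 w) = (c%:E * mu (\bigcup_w E2 w))%E.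
Proof.
move=> m1 m2 t1 t2 c0 H.
pose G (E : Zt -> set T) (n : nat) := if pickle_inv n is Some w then E w else set0.
have GU E : \bigcup_w E w = \bigcup_n G E n.
  apply/seteqP; split => t [w _ Et].
    by exists (pickle w) => //; rewrite /G pickleK_inv.
  by move: Et; rewrite /G; case: pickle_inv => // w' Et; exists w'.
have Gm E : (forall w, measurable (E w)) -> forall n, measurable (G E n).
  by move=> mE n; rewrite /G; case: pickle_inv.
have Gt E : trivIset setT E -> trivIset setT (G E).
  move=> tE i j _ _; rewrite /G.
  case Hi: (pickle_inv i) => [wi|]; last by rewrite set0I => -[].
  case Hj: (pickle_inv j) => [wj|]; last by rewrite setI0 => -[].
  move=> /(tE _ _ I I) e; subst wj.
  by rewrite -(@pickle_invK Zt i) -(@pickle_invK Zt j) Hi Hj.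
rewrite !GU !measure_bigcup //=; try by [apply: Gm | apply: Gt].
rewrite -nneseriesZl; last by move=> i _; exact: measure_ge0.
apply: eq_eseriesr => n _; rewrite /G; case: pickle_inv => [w|]; first exact: H.
by rewrite measure0 mule0.
by move=> i _; apply: Gm.
by move=> i _; apply: Gm.
Qed.

Section Meas.
Variables (d : measure_display) (T : measurableType d) (R : realType).
Variables (K : nat) (Zt : countType) (Pr : probability T R).
Variables (P : 'M[R]_K) (pi : 'I_K -> R) (r : 'I_K -> Zt -> R).
Variables (X : nat -> T -> 'I_K) (Z : nat -> T -> Zt).
Hypothesis mX : forall n x, measurable [set t | X n t = x].
Hypothesis mZ : forall n z, measurable [set t | Z n t = z].
Hypothesis r0 : forall y z, 0 <= r y z.
Hypothesis Hpath : forall n (xs : nat -> 'I_K),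
  Pr (Defs.path_le X n xs) = (pi (xs 0%N) * \prod_(i < n) P (xs i) (xs i.+1))%:E.
Hypothesis HZ : forall n (xs : nat -> 'I_K) (zs : nat -> Zt) (z : Zt),
  Pr (Defs.path_le X n xs `&` Defs.path_lt Z n zs `&` [set t | Z n t = z]) =
  ((r (xs n) z)%:E * Pr (Defs.path_le X n xs `&` Defs.path_lt Z n zs))%E.

Lemma path_le_m n xs : measurable (Defs.path_le X n xs).
Proof.
have -> : Defs.path_le X n xs = \bigcap_(i in [set i | (i <= n)%N]) [set t | X i t = xs i].
  by [].
by apply: bigcap_measurableType => i _; apply: mX.
Qed.

Lemma path_lt_m n zs : measurable (Defs.path_lt Z n zs).
Proof.
have -> : Defs.path_lt Z n zs = \bigcap_(i in [set i | (i < n)%N]) [set t | Z i t = zs i].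
  by [].
by apply: bigcap_measurableType => i _; apply: mZ.
Qed.

Definition updz (zs : nat -> Zt) k w := fun i => if i == k then w else zs i.

Lemma Zmarg N xs z :
  Pr (Defs.path_le X N xs `&` [set t | Z N t = z]) =
  ((r (xs N) z)%:E * Pr (Defs.path_le X N xs))%E.
Proof.
have key : forall j, (j <= N)%N -> forall zs,
  Pr (Defs.path_le X N xs `&` Defs.path_lt Z (N - j) zs `&` [set t | Z N t = z]) =
  ((r (xs N) z)%:E * Pr (Defs.path_le X N xs `&` Defs.path_lt Z (N - j) zs))%E.
  elim => [|j IH] jN zs; first by rewrite subn0 HZ.
  set k := (N - j.+1)%N.
  have Ek : (N - j)%N = k.+1 by rewrite /k subnSK.
  have kN : (k < N)%N by rewrite /k ltn_subrL (leq_trans _ jN).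
  pose A := Defs.path_le X N xs.
  have U1 : A `&` Defs.path_lt Z k zs =
            \bigcup_w (A `&` Defs.path_lt Z k.+1 (updz zs k w)).
    apply/seteqP; split => t.
      move=> [At Zt']; exists (Z k t) => //; split => // i; rewrite ltnS leq_eqVlt.
      rewrite /updz; case: eqP => [->|_ /= ik] //; exact: Zt'.
    move=> [w _ [At Zt']]; split => // i ik; have := Zt' i (ltnW ik).
    by rewrite /updz (ltn_eqF ik).
  have U2 : A `&` Defs.path_lt Z k zs `&` [set t | Z N t = z] =
            \bigcup_w (A `&` Defs.path_lt Z k.+1 (updz zs k w) `&` [set t | Z N t = z]).
    by rewrite U1 setI_bigcupl.
  have T0 : trivIset setT (fun w => A `&` Defs.path_lt Z k.+1 (updz zs k w)).
    move=> w1 w2 _ _ [t [[_ h1] [_ h2]]].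
    by have := h1 k (ltnSn k); have := h2 k (ltnSn k); rewrite /updz eqxx => -> ->.
  rewrite U2 U1; apply: cadd => //.
  - by move=> w; apply: measurableI; [apply: measurableI|]; 
      [apply: path_le_m|apply: path_lt_m|apply: mZ].
  - by move=> w; apply: measurableI; [apply: path_le_m|apply: path_lt_m].
  - move=> w1 w2 _ _ [t [[h1 _] [h2 _]]]; by apply: T0 => //; exists t.
  - by move=> w; rewrite /A -Ek; apply: IH; apply: ltnW.
have := key N (leqnn N) (fun _ => z); rewrite subnn.
have -> : Defs.path_lt Z 0 (fun _ => z) = setT by apply/seteqP; split.
by rewrite setIT.
Qed.


Definition Ev N (c : nat -> option 'I_K) :=
  [set t | forall i, (i <= N)%N -> forall w, c i = Some w -> X i t = w].

Lemma Ev_m N c : measurable (Ev N c).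
Proof.
have -> : Ev N c = \bigcap_(i in [set i | (i <= N)%N])
                     [set t | forall w, c i = Some w -> X i t = w] by [].
apply: bigcap_measurableType => i _.
case E: (c i) => [w|].
  have -> : [set t | forall w0, Some w = Some w0 -> X i t = w0] = [set t | X i t = w].
    by apply/seteqP; split => t /=; [apply|move=> -> w0 [->]].
  exact: mX.
have -> : [set t | forall w0, None = Some w0 -> X i t = w0] = setT by apply/seteqP; split.
exact: measurableT.
Qed.

Lemma split_X S k : measurable S ->
  Pr S = (\sum_(w < K) Pr (S `&` [set t | X k t = w]))%E.
Proof.
move=> mS; rewrite -measure_bigsetU_ord //.
- congr (Pr _); rewrite -bigcup_seq; apply/seteqP; split => t.
    by move=> St; exists (X k t) => //=; rewrite mem_index_enum.
  by move=> [w _ []].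
- by move=> w; apply: measurableI.
- move=> w1 w2 _ _ [t [[_ h1] [_ h2]]]; by rewrite -h1 -h2.
Qed.

Lemma L2 N B (g : 'I_K -> R) : measurable B ->
  (forall xs, Pr (Defs.path_le X N xs `&` B) = ((g (xs N))%:E * Pr (Defs.path_le X N xs))%E) ->
  forall c, Pr (Ev N c `&` B) = (\sum_(y < K) beta P pi c N y * g y)%:E.
Proof.
move=> mB HB.
suff Q : forall k c, (forall i, (k <= i <= N)%N -> c i != None) ->
   Pr (Ev N c `&` B) = (\sum_(y < K) beta P pi c N y * g y)%:E.
  move=> c; apply: (Q N.+1) => i /andP [Hi Hi']; by move: (leq_trans Hi Hi'); rewrite ltnn.
elim => [|k IH] c Hc.
  have : c 0%N != None by apply: Hc.
  case E0 : (c 0%N) => [w0|] // _.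
  pose xs i := odflt w0 (c i).
  have Hxs i : (i <= N)%N -> c i = Some (xs i).
    by move=> iN; have := Hc i iN; rewrite /xs; case: (c i).
  have -> : Ev N c = Defs.path_le X N xs.
    apply/seteqP; split => t Ht i iN.
      by apply: (Ht i iN); apply: Hxs.
    by move=> w; rewrite Hxs // => -[<-]; apply: Ht.
  rewrite HB Hpath -EFinM; congr (_%:E).
  rewrite (eq_bigr (fun y => beta P pi (fun i => Some (xs i)) N y * g y)); last first.
    by move=> y _; rewrite (@beta_dep _ _ _ _ c (fun i => Some (xs i))) // => i iN; apply: Hxs.
  under eq_bigr do rewrite beta_full.
  rewrite (bigD1 (xs N)) //= eqxx [X in _ + X]big1 ?addr0; last first.
    by move=> y /negPf ->; rewrite !mul0r.
  by rewrite mul1r mulrC.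
case: (leqP k N) => kN; last first.
  apply: IH => i /andP [Hi Hi']; exfalso; have := leq_trans Hi Hi'.
  by rewrite leqNgt kN.
case Ek: (c k) => [wk|].
  apply: IH => i /andP [Hi Hi']; move: Hi; rewrite leq_eqVlt => /orP [/eqP <-|Hi].
    by rewrite Ek.
  by apply: Hc; rewrite Hi.
rewrite (@split_X _ k); last by apply: measurableI; [apply: Ev_m|].
have Eq w : Ev N c `&` B `&` [set t | X k t = w] = Ev N (updc c k w) `&` B.
  apply/seteqP; split => t.
    move=> [[Ht Bt] Xt]; split => // i iN w'; rewrite /updc; case: eqP => [-> [<-]//|_].
    exact: Ht.
  move=> [Ht Bt]; split; last by apply: (Ht k kN); rewrite /updc eqxx.
  split => // i iN w' Ei; apply: (Ht i iN); rewrite /updc; case: eqP => // Eik.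
  by move: Ei; rewrite Eik Ek.
have IH' w : Pr (Ev N (updc c k w) `&` B) =
     (\sum_(y < K) beta P pi (updc c k w) N y * g y)%:E.
  apply: IH => i /andP [Hi Hi']; rewrite /updc; case: (eqVneq i k) => [_|ik] //.
  have ki : (k < i)%N by rewrite ltn_neqAle eq_sym ik Hi.
  by apply: Hc; rewrite ki Hi'.
under eq_bigr do rewrite Eq IH'.
rewrite sumEFin; congr (_%:E).
rewrite exchange_big /=; apply: eq_bigr => y _.
by rewrite -big_distrl /= beta_lin.
Qed.

Hypothesis stat : forall y, \sum_(x < K) pi x * P x y = pi y.

Lemma probX n x : Pr [set t | X n t = x] = (pi x)%:E.
Proof.
have -> : [set t | X n t = x] = Ev n (cx n x) `&` setT.
  rewrite setIT; apply/seteqP; split => t.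
    by move=> <- i iN w; rewrite /cx; case: eqP => [-> [<-]|].
  by apply; rewrite // /cx eqxx.
rewrite (@L2 n setT (fun _ => 1)) //; last by move=> xs; rewrite setIT mul1e.
congr (_%:E); under eq_bigr do rewrite mulr1 beta_cx_eq //.
rewrite (bigD1 x) //= eqxx mul1r [X in _ + X]big1 ?addr0 //.
by move=> y /negPf ->; rewrite mul0r.
Qed.

Lemma probZ N z : Pr [set t | Z N t = z] = (\sum_(y < K) pi y * r y z)%:E.
Proof.
have -> : [set t | Z N t = z] = Ev N (fun _ => None) `&` [set t | Z N t = z].
  by apply/seteqP; split => t // [].
rewrite (@L2 N _ (fun y => r y z)) //; last by move=> xs; rewrite Zmarg.
by congr (_%:E); under eq_bigr do rewrite beta_none //.
Qed.

Lemma probZX (lam : 'I_K -> R) (f : 'I_K -> 'I_K -> R)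
  (compl : forall x y, pi x * \sum_(j < K) f j x * f j y = (x == y)%:R)
  (rev : forall x y, pi x * P x y = pi y * P y x)
  (eig : forall j x, \sum_(y < K) P x y * f j y = lam j * f j x) n L x z :
  Pr ([set t | Z (n + L)%N t = z] `&` [set t | X n t = x]) =
  (\sum_(y < K) pi x * pi y * (\sum_(j < K) lam j ^+ L * f j x * f j y) * r y z)%:E.
Proof.
have -> : [set t | Z (n + L)%N t = z] `&` [set t | X n t = x] =
          Ev (n + L) (cx n x) `&` [set t | Z (n + L)%N t = z].
  rewrite setIC; apply/seteqP; split => t [Ht Zt']; split => //.
    by move=> i iN w; rewrite /cx; case: eqP => [-> [<-]|].
  by apply: (Ht n (leq_addr _ _)); rewrite /cx eqxx.
rewrite (@L2 (n + L) _ (fun y => r y z)) //; last by move=> xs; rewrite Zmarg.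
by congr (_%:E); under eq_bigr do rewrite (beta_cx_spec stat compl rev eig).
Qed.
End Meas.
Lemma amgm (R : realType) (s a b : R) : 0 < s ->
  2 * (`|a| * `|b|) <= s * a ^+ 2 + b ^+ 2 / s.
Proof.
move=> sp.
rewrite -(real_normK (num_real a)) -(real_normK (num_real b)).
move: `|a| `|b| => u v.
have h : 0 <= (s * u - v) ^+ 2 / s by apply: divr_ge0; [apply: sqr_ge0|apply: ltW].
have e : (s * u - v) ^+ 2 / s = s * u ^+ 2 + v ^+ 2 / s - 2 * (u * v).
  by field; rewrite gt_eqF.
by rewrite -subr_ge0 -e.
Qed.

Lemma opt (R : realType) (V H E : R) : 0 <= H -> 0 <= E ->
  (forall t, 0 < t -> V <= (t * H + E / t) / 2) -> V <= Num.sqrt H * Num.sqrt E.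
Proof.
move=> H0 E0 Ht.
have sH := sqr_sqrtr H0; have sE := sqr_sqrtr E0.
have [Hp|] := ltP 0 H; last first.
  move=> HH; have H00 : H = 0 by apply/eqP; rewrite eq_le HH H0.
  rewrite H00 sqrtr0 mul0r; rewrite leNgt; apply/negP => Vp.
  have tp : 0 < (E + 1) / V by apply: divr_gt0 => //; lra.
  have := Ht _ tp; rewrite H00 mulr0 add0r.
  have -> : E / ((E + 1) / V) = E * V / (E + 1) by field; rewrite !gt_eqF //; lra.
  move=> h; have : E * V / (E + 1) < 2 * V.
    rewrite ltr_pdivrMr; last lra.
    nra.
  lra.
have [Ep|] := ltP 0 E; last first.
  move=> EE; have E00 : E = 0 by apply/eqP; rewrite eq_le EE E0.
  rewrite E00 sqrtr0 mulr0; rewrite leNgt; apply/negP => Vp.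
  have tp : 0 < V / (H + 1) by apply: divr_gt0 => //; lra.
  have := Ht _ tp; rewrite E00 mul0r addr0.
  move=> h; have : V / (H + 1) * H < 2 * V.
    rewrite mulrAC ltr_pdivrMr; last lra.
    nra.
  lra.
have sHp : 0 < Num.sqrt H by rewrite sqrtr_gt0.
have sEp : 0 < Num.sqrt E by rewrite sqrtr_gt0.
have tp : 0 < Num.sqrt E / Num.sqrt H by apply: divr_gt0.
have := Ht _ tp.
move: (Num.sqrt H) (Num.sqrt E) sH sE sHp sEp tp => a b <- <- ap bp _.
have -> : (b / a * a ^+ 2 + b ^+ 2 / (b / a)) / 2 = a * b by field; rewrite !gt_eqF.
by [].
Qed.

Lemma esum_scale_le (R : realType) (T : choiceType) (S : set T) (a : T -> \bar R) (c : R) :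
  0 <= c -> (forall i, (0 <= a i)%E) ->
  (\esum_(i in S) (c%:E * a i) <= c%:E * \esum_(i in S) a i)%E.
Proof.
move=> c0 a0; apply: ge_ereal_sup => _ [X [finX XS] <-] /=.
rewrite fsbig_finite //= -ge0_sume_distrr; last by move=> i _; apply: a0.
rewrite lee_wpmul2l ?lee_fin // -fsbig_finite //.
by apply: ereal_sup_ubound; exists X.
Qed.

Lemma esum_scale (R : realType) (T : choiceType) (S : set T) (a : T -> \bar R) (c : R) :
  0 <= c -> (forall i, (0 <= a i)%E) ->
  (\esum_(i in S) (c%:E * a i) = c%:E * \esum_(i in S) a i)%E.
Proof.
move=> c0 a0; apply/eqP; rewrite eq_le esum_scale_le //=.
have [->|cpos] := eqVneq c 0.
  by rewrite mul0e; apply: esum_ge0 => i _; rewrite mul0e.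
have c0' : 0 < c by rewrite lt_neqAle eq_sym cpos c0.
have ci : 0 <= c^-1 by rewrite invr_ge0.
have := @esum_scale_le R T S (fun i => c%:E * a i)%E c^-1 ci.
rewrite (eq_esum (b := a)); last first.
  by move=> i _; rewrite muleA -EFinM mulVf ?mul1e // gt_eqF.
have c0E : (0 <= c%:E)%E by rewrite lee_fin.
move=> H; have := H (fun i => mule_ge0 c0E (a0 i)).
move/(lee_wpmul2l c0E).
by rewrite muleA -EFinM divff ?mul1e // gt_eqF.
Qed.

Section Ana.
Variables (R : realType) (K : nat) (Zt : countType).
Variables (pi : 'I_K -> R) (r : 'I_K -> Zt -> R).
Hypothesis pi_pos : forall y, 0 < pi y.
Hypothesis pi_sum : \sum_(y < K) pi y = 1.
Hypothesis r0 : forall y z, 0 <= r y z.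
Hypothesis rsum : forall y, (\esum_(z in [set: Zt]) (r y z)%:E = 1)%E.

Definition qq z := \sum_(y < K) pi y * r y z.
Definition AA z := \sum_(y < K) pi y * r y z ^+ 2.
Definition BB z := if 0 < qq z then AA z / qq z - qq z else 0.

Lemma qq_ge0 z : 0 <= qq z.
Proof. by apply: sumr_ge0 => y _; apply: mulr_ge0; [apply: ltW|]. Qed.

Lemma esum_qq : (\esum_(z in [set: Zt]) (qq z)%:E = 1)%E.
Proof.
rewrite (eq_esum (b := fun z => \sum_(y < K) (pi y * r y z)%:E)); last first.
  by move=> z _; rewrite sumEFin.
rewrite esum_sum; last by move=> z y _ _; rewrite lee_fin mulr_ge0 // ltW.
rewrite (eq_bigr (fun y => (pi y)%:E)) ?sumEFin ?pi_sum // => y _.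
rewrite (eq_esum (b := fun z => ((pi y)%:E * (r y z)%:E)%E)) //.
rewrite esum_scale; [by rewrite rsum mule1 | exact: ltW | by move=> z; rewrite lee_fin].
Qed.

Lemma GG z : \sum_(y < K) pi y * (r y z - qq z) ^+ 2 = AA z - qq z ^+ 2.
Proof.
transitivity (\sum_(y < K) (pi y * r y z ^+ 2) - (2 * qq z) * \sum_(y < K) (pi y * r y z)
              + qq z ^+ 2 * \sum_(y < K) pi y).
  move: (qq z) => Q; rewrite !mulr_sumr -sumrB -big_split /=; apply: eq_bigr => y _; ring.
rewrite pi_sum -/(qq z) /AA; ring.
Qed.

Lemma AA_ge z : qq z ^+ 2 <= AA z.
Proof.
rewrite -subr_ge0 -GG; apply: sumr_ge0 => y _.
by apply: mulr_ge0; [apply: ltW|apply: sqr_ge0].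
Qed.

Lemma qq0_r z : ~~ (0 < qq z) -> forall y, r y z = 0.
Proof.
move=> H y.
have q0 : qq z = 0 by apply/eqP; rewrite eq_le qq_ge0 andbT leNgt.
have nn : forall i : 'I_K, predT i -> 0 <= pi i * r i z.
  by move=> i _; apply: mulr_ge0; [apply: ltW|].
have /= := @psumr_eq0P _ _ predT (fun y => pi y * r y z) nn q0 y isT.
move=> /eqP; rewrite mulf_eq0 (gt_eqF (pi_pos y)) /=; by move/eqP.
Qed.

Lemma BB_ge0 z : 0 <= BB z.
Proof.
rewrite /BB; case: ifPn => // qp.
rewrite subr_ge0 ler_pdivlMr // -expr2; exact: AA_ge.
Qed.

Lemma Rratio_eq :
  Rratio pi r = (\esum_(z in [set: Zt]) (BB z)%:E + 1)%E.
Proof.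
rewrite /Rratio -/qq.
rewrite (eq_esum (b := fun z => ((AA z / qq z - qq z)%:E + (qq z)%:E)%E)); last first.
  by move=> z _; rewrite -EFinD subrK.
rewrite esumD; first last.
- by move=> z _; rewrite lee_fin qq_ge0.
- move=> z /= qp; rewrite lee_fin subr_ge0 ler_pdivlMr // -expr2; exact: AA_ge.
have E z : (z \in [set z0 | 0 < \sum_(y < K) pi y * r y z0]) = (0 < qq z).
  by apply/idP/idP => [/set_mem|/mem_set].
congr (_ + _)%E.
  rewrite esum_mkcond; apply: eq_esum => z _; rewrite /BB E.
  by case: ifPn.
rewrite -esum_qq esum_mkcond; apply: eq_esum => z _.
rewrite E; case: ifPn => //= qp.
have -> // : qq z = 0 by apply/eqP; rewrite eq_le qq_ge0 andbT leNgt.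
Qed.

Lemma Rratio_ge1 : (1 <= Rratio pi r)%E.
Proof. by rewrite Rratio_eq leeDr // esum_ge0 // => z _; rewrite lee_fin BB_ge0. Qed.

Lemma Rratio_leK : (Rratio pi r <= K%:R%:E)%E.
Proof.
rewrite /Rratio; set S := [set z | _].
apply: (@le_trans _ _ (\esum_(z in S) (\sum_(y < K) r y z)%:E)).
  apply: le_esum => z /= qp; rewrite lee_fin -/(qq z) in qp *.
  rewrite ler_pdivrMr // /qq /AA mulr_sumr; apply: ler_sum => y _.
  rewrite expr2 mulrA [X in _ <= X]mulrC ler_wpM2l //.
    by apply: mulr_ge0 => //; apply: ltW.
  rewrite (bigD1 y) //= lerDl; apply: sumr_ge0 => *; exact: r0.
apply: (@le_trans _ _ (\esum_(z in [set: Zt]) (\sum_(y < K) r y z)%:E)).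
  rewrite [X in (X <= _)%E]esum_mkcond; apply: le_esum => z _.
  case: ifPn => // _; rewrite lee_fin; apply: sumr_ge0 => *; exact: r0.
rewrite (eq_esum (b := fun z => \sum_(y < K) (r y z)%:E)); last by move=> z _; rewrite sumEFin.
rewrite esum_sum; last by move=> z y _ _; rewrite lee_fin.
under eq_bigr do rewrite rsum.
by rewrite sumEFin sumr_const card_ord.
Qed.

Lemma pw (h : 'I_K -> R) (Hh0 : \sum_(y < K) pi y * h y = 0) t (tp : 0 < t) z :
  `|\sum_(y < K) pi y * h y * r y z| <=
    (t * (\sum_(y < K) pi y * h y ^+ 2) * qq z + BB z / t) / 2.
Proof.
rewrite /BB; case: ifPn => qp; last first.
  have -> : \sum_(y < K) pi y * h y * r y z = 0.
    by apply: big1 => y _; rewrite qq0_r // mulr0.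
  have -> : qq z = 0 by apply/eqP; rewrite eq_le qq_ge0 andbT leNgt.
  by rewrite normr0 mulr0 mul0r addr0 mul0r.
have -> : \sum_(y < K) pi y * h y * r y z = \sum_(y < K) pi y * h y * (r y z - qq z).
  transitivity (\sum_(y < K) pi y * h y * r y z - qq z * \sum_(y < K) pi y * h y).
    by rewrite Hh0 mulr0 subr0.
  rewrite mulr_sumr -sumrB; apply: eq_bigr => y _; ring.
set s := t * qq z.
have sp : 0 < s by apply: mulr_gt0.
apply: (le_trans (ler_norm_sum _ _ _)).
apply: (@le_trans _ _ (\sum_(y < K) pi y * (s * h y ^+ 2 + (r y z - qq z) ^+ 2 / s) / 2)).
  apply: ler_sum => y _.
  rewrite normrM normrM (ger0_norm (ltW (pi_pos y))) -mulrA ler_pdivlMr // mulrAC.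
  rewrite -mulrA; apply: ler_wpM2l; [exact: ltW | exact: amgm].
rewrite -mulr_suml; apply: ler_wpM2r; first by rewrite invr_ge0.
rewrite (eq_bigr (fun y => s * (pi y * h y ^+ 2) + (pi y * (r y z - qq z) ^+ 2) / s)); last first.
  by move=> y _; ring.
rewrite big_split /= -mulr_sumr -mulr_suml GG.
have -> : (AA z - qq z ^+ 2) / s = (AA z / qq z - qq z) / t.
  by rewrite /s; field; rewrite !gt_eqF.
by rewrite /s mulrAC.
Qed.

Lemma tv_core (h : 'I_K -> R) (Hh0 : \sum_(y < K) pi y * h y = 0) :
  (\esum_(z in [set: Zt]) (`|\sum_(y < K) pi y * h y * r y z|)%:E <=
   (Num.sqrt (\sum_(y < K) pi y * h y ^+ 2) * Num.sqrt (fine (Rratio pi r) - 1))%:E)%E.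
Proof.
set H := \sum_(y < K) pi y * h y ^+ 2.
have H0 : 0 <= H by apply: sumr_ge0 => y _; apply: mulr_ge0; [apply: ltW|apply: sqr_ge0].
have fin : Rratio pi r = (fine (Rratio pi r))%:E.
  rewrite fineK // ge0_fin_numE; last by apply: (le_trans _ Rratio_ge1).
  by apply: (le_lt_trans Rratio_leK); rewrite ltey.
set E := fine (Rratio pi r) - 1.
have EB : (\esum_(z in [set: Zt]) (BB z)%:E)%E = E%:E.
  have := Rratio_eq; rewrite fin => /(congr1 (fun x => x - 1)%E).
  rewrite addeK // => <-; by rewrite /E EFinB.
have E0 : 0 <= E by rewrite /E subr_ge0 -lee_fin -fin Rratio_ge1.
apply: ge_ereal_sup => _ [X [finX XS] <-] /=.
rewrite fsbig_finite //= sumEFin lee_fin.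
apply: opt => // t tp.
set sq := finmap.enum_fset _.
apply: (@le_trans _ _ (\sum_(z <- sq) (t * H * qq z + BB z / t) / 2)).
  by apply: ler_sum => z _; apply: pw.
rewrite -mulr_suml ler_wpM2r ?invr_ge0 // big_split /= -mulr_sumr -mulr_suml.
have q1 : \sum_(z <- sq) qq z <= 1.
  rewrite -lee_fin -sumEFin -esum_qq -fsbig_finite //.
  by apply: ereal_sup_ubound; exists X.
have b1 : \sum_(z <- sq) BB z <= E.
  rewrite -lee_fin -sumEFin -EB -fsbig_finite //.
  by apply: ereal_sup_ubound; exists X.
have tH : 0 <= t * H by apply: mulr_ge0 => //; apply: ltW.
apply: lerD.
  by rewrite -{2}(mulr1 (t * H)) ler_wpM2l.
by rewrite ler_wpM2r // invr_ge0 ltW.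
Qed.
End Ana.
Lemma sq_expand (R : realType) K (pi : 'I_K -> R) (f : 'I_K -> 'I_K -> R)
  (ON : forall i j, \sum_(x < K) pi x * f i x * f j x = (i == j)%:R) (a : 'I_K -> R) :
  \sum_(y < K) pi y * (\sum_(j < K) a j * f j y) ^+ 2 = \sum_(j < K) a j ^+ 2.
Proof.
transitivity (\sum_(y < K) \sum_(j < K) \sum_(k < K) a j * a k * (pi y * f j y * f k y)).
  apply: eq_bigr => y _; rewrite expr2 mulr_suml mulr_sumr; apply: eq_bigr => j _.
  rewrite !mulr_sumr; apply: eq_bigr => k _; ring.
rewrite exchange_big /=; apply: eq_bigr => j _.
rewrite exchange_big /=.
rewrite (eq_bigr (fun k => a j * a k * (j == k)%:R)); last first.
  by move=> k _; rewrite -mulr_sumr ON.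
rewrite (bigD1 j) //= eqxx mulr1 big1 ?addr0 ?expr2 //.
by move=> k /negPf; rewrite eq_sym => ->; rewrite mulr0.
Qed.

Lemma lstar_ge (R : realType) K (lam : 'I_K -> R) (j : 'I_K) : (0 < j)%N ->
  `|lam j| <= lambda_star lam.
Proof.
move=> j0; rewrite /lambda_star.
have : j \in index_enum 'I_K by rewrite mem_index_enum.
elim: (index_enum 'I_K) => //= i s IH; rewrite in_cons big_cons => /orP [/eqP <-|js].
  by rewrite j0 le_max lexx.
by case: ifP => _; rewrite ?le_max IH ?orbT.
Qed.

Lemma lstar_ge0 (R : realType) K (lam : 'I_K -> R) : 0 <= lambda_star lam.
Proof.
rewrite /lambda_star; apply: (big_ind (fun v => 0 <= v)) => //.
by move=> u v u0 v0; rewrite le_max u0.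
Qed.

Unset Implicit Arguments.
Theorem theorem2 (d : measure_display) (T : measurableType d) (R : realType)
    (K : nat) (Zt : countType) (Pr : probability T R)
    (P : 'M[R]_K) (pi : 'I_K -> R) (r : 'I_K -> Zt -> R)
    (X : nat -> T -> 'I_K) (Z : nat -> T -> Zt)
    (lam : 'I_K -> R) (f : 'I_K -> 'I_K -> R) :
  stochastic P -> irreducible P -> aperiodic P ->
  stationary_distribution P pi ->
  markov_modulated Pr P pi r X Z ->
  reversible P pi ->
  (* eigen-decomposition: f j is a real eigenfunction with eigenvalue lam j,
     orthonormal in <.,.>_pi, f 0 = 1, 1 = lam 0 >= lam 1 >= ... > -1 *)
  (forall j x, \sum_(y < K) P x y * f j y = lam j * f j x) ->
  (forall i j, \sum_(x < K) pi x * f i x * f j x = (i == j)%:R) ->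
  (forall (j0 : 'I_K) x, nat_of_ord j0 = 0%N -> f j0 x = 1) ->
  (forall (j0 : 'I_K), nat_of_ord j0 = 0%N -> lam j0 = 1) ->
  (forall i j : 'I_K, (i <= j)%N -> lam j <= lam i) ->
  (forall j, -1 < lam j) ->
  ((1%:E <= Rratio pi r)%E /\ (Rratio pi r <= K%:R%:E)%E) /\
  (forall (x : 'I_K) (n L : nat),
     (predictability Pr X Z x n L <=
       (2^-1 * Num.sqrt (\sum_(j < K | (0 < j)%N) lam j ^+ (2 * L) * f j x ^+ 2)
        * Num.sqrt 2 * Num.sqrt (fine (Rratio pi r) - 1))%:E)%E /\
     (predictability Pr X Z x n L <=
       (2^-1 * lambda_star lam ^+ L * Num.sqrt ((pi x)^-1 - 1)
        * Num.sqrt 2 * Num.sqrt (fine (Rratio pi r) - 1))%:E)%E).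
Proof.
move=> stoch irr aper [pi0 [pisum stat]] [mX [mZ [r0 [rsum [Hpath HZ]]]]] rev eig ON f0 lam0 mono lamgt.
have compl := @completeness _ _ _ _ ON.
have pi_pos x : 0 < pi x.
  rewrite lt_neqAle pi0 andbT eq_sym; apply/eqP => e.
  by have := compl x x; rewrite e mul0r eqxx => /esym/eqP; rewrite oner_eq0.
have Kp : (0 < K)%N.
  rewrite lt0n; apply/eqP => K0.
  have : \sum_(x < K) pi x = 0 by apply: big1 => i _; have := leq_trans (ltn_ord i) (eq_leq K0).
  by rewrite pisum => /eqP; rewrite oner_eq0.
pose j0 := Ordinal Kp.
have f0' y : f j0 y = 1 by apply: f0.
have l0 : lam j0 = 1 by apply: lam0.
have jP (j : 'I_K) : (j != j0) = (0 < j)%N by rewrite -val_eqE /= lt0n.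
have ge1 := Rratio_ge1 pi_pos pisum r0 rsum.
have leK := Rratio_leK pi_pos r0 rsum.
split; first by split.
move=> x n L.
pose a' := fun j : 'I_K => if (0 < j)%N then lam j ^+ L * f j x else 0.
pose h := fun y => \sum_(j < K) a' j * f j y.
have Sh y : \sum_(j < K) lam j ^+ L * f j x * f j y = 1 + h y.
  rewrite (bigD1 j0) //= f0' f0' l0 expr1n !mulr1; congr (_ + _).
  rewrite /h [X in _ = X](bigD1 j0) //= {1}/a' ltnn mul0r add0r.
  by apply: eq_bigr => j; rewrite jP => jp; rewrite /a' jp.
have h0 : \sum_(y < K) pi y * h y = 0.
  transitivity (\sum_(j < K) a' j * \sum_(y < K) pi y * f j y).
    rewrite /h; under eq_bigr do rewrite mulr_sumr.
    rewrite exchange_big; apply: eq_bigr => j _; rewrite mulr_sumr.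
    by apply: eq_bigr => y _; ring.
  rewrite (bigD1 j0) //= {1}/a' ltnn mul0r add0r big1 // => j jn.
  have -> : \sum_(y < K) pi y * f j y = 0.
    rewrite (eq_bigr (fun y => pi y * f j0 y * f j y)); last by move=> y _; rewrite f0' mulr1.
    by rewrite ON eq_sym (negbTE jn).
  by rewrite mulr0.
have HH : \sum_(y < K) pi y * h y ^+ 2 =
          \sum_(j < K | (0 < j)%N) lam j ^+ (2 * L) * f j x ^+ 2.
  rewrite /h sq_expand // [X in _ = X]big_mkcond /=; apply: eq_bigr => j _; rewrite /a'.
  by case: ifP => _; [rewrite exprMn -exprM mulnC | rewrite expr0n].
have pred_eq : predictability Pr X Z x n L =
   ((2^-1)%:E * \esum_(z in [set: Zt]) (`|\sum_(y < K) pi y * h y * r y z|)%:E)%E.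
  rewrite /predictability /TV; congr (_ * _)%E; apply: eq_esum => z _; congr (`|_|%:E).
  rewrite (probZX mX mZ r0 Hpath HZ stat compl rev eig) (probX mX Hpath stat).
  rewrite (probZ mX mZ r0 Hpath HZ stat) /=.
  transitivity (\sum_(y < K) pi y * (\sum_(j < K) lam j ^+ L * f j x * f j y) * r y z
                - \sum_(y < K) pi y * r y z).
    congr (_ - _); rewrite mulr_suml; apply: eq_bigr => y _.
    by field; rewrite gt_eqF.
  by rewrite -sumrB; apply: eq_bigr => y _; rewrite Sh; ring.
have core := tv_core pi_pos pisum r0 rsum h0.
rewrite HH in core.
set H := \sum_(j < K | (0 < j)%N) lam j ^+ (2 * L) * f j x ^+ 2 in core *.
set E := fine (Rratio pi r) - 1 in core *.
have H0 : 0 <= H.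
  by apply: sumr_ge0 => j _; apply: mulr_ge0; [rewrite exprM exprn_ge0 // sqr_ge0 | exact: sqr_ge0].
have s2 : 1 <= Num.sqrt (2 : R) by rewrite -{1}sqrtr1 ler_sqrt; lra.
have sHE : 0 <= Num.sqrt H * Num.sqrt E by apply: mulr_ge0; apply: sqrtr_ge0.
have main : (predictability Pr X Z x n L <= (2^-1 * (Num.sqrt H * Num.sqrt E))%:E)%E.
  rewrite pred_eq EFinM; apply: lee_wpmul2l => //; rewrite lee_fin invr_ge0; lra.
split.
  apply: (le_trans main); rewrite lee_fin.
  rewrite -!mulrA; apply: ler_wpM2l; first by rewrite invr_ge0 ler0n.
  apply: ler_wpM2l; first exact: sqrtr_ge0.
  by rewrite ler_peMl // sqrtr_ge0.
apply: (le_trans main); rewrite lee_fin.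
rewrite -!mulrA; apply: ler_wpM2l; first by rewrite invr_ge0 ler0n.
have ls0 := lstar_ge0 lam.
set W := (pi x)^-1 - 1.
have HW : H <= lambda_star lam ^+ (2 * L) * W.
  have -> : W = \sum_(j < K | (0 < j)%N) f j x ^+ 2.
    have : \sum_(j < K) f j x ^+ 2 = (pi x)^-1.
      have := compl x x; rewrite eqxx => e.
      apply: (mulfI (negbT (gt_eqF (pi_pos x)))); rewrite mulfV ?gt_eqF // -e.
    rewrite (bigD1 j0) //= f0' expr1n => e; rewrite /W -e addrAC subrr add0r.
    by apply: eq_bigl => j; rewrite jP.
  rewrite mulr_sumr; apply: ler_sum => j jp; apply: ler_wpM2r; first exact: sqr_ge0.
  rewrite !exprM; apply: lerXn2r; rewrite ?nnegrE ?sqr_ge0 //.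
  by rewrite -(real_normK (num_real (lam j))) lerXn2r ?nnegrE ?normr_ge0 ?lstar_ge // -jP.
have Hs : Num.sqrt H <= lambda_star lam ^+ L * Num.sqrt W.
  apply: (le_trans (_ : _ <= Num.sqrt (lambda_star lam ^+ (2 * L) * W))).
    by rewrite ler_sqrt // (le_trans H0 HW).
  rewrite sqrtrM; last by rewrite mulnC exprM sqr_ge0.
  by rewrite mulnC exprM sqrtr_sqr ger0_norm // exprn_ge0.
have LW : 0 <= lambda_star lam ^+ L * Num.sqrt W by apply: mulr_ge0; [apply: exprn_ge0|apply: sqrtr_ge0].
apply: (@le_trans _ _ (lambda_star lam ^+ L * Num.sqrt W * Num.sqrt E)).
  by apply: ler_wpM2r; [apply: sqrtr_ge0|].
rewrite !mulrA; apply: ler_wpM2r; first exact: sqrtr_ge0.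
by rewrite ler_peMr.
Qed.
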